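(* Let $K$ be a field, $S=K[X_1,\ldots,X_n]$ with the standard grading, $I\subset S$ a monomial ideal such that $R=S/I$ is generalized Cohen–Macaulay, $d=\dim R$, and $\mathfrak m$ the graded maximal ideal of $R$. Let $\rho_j=\max\{\nu_j(u)\mid u\in G(I)\}$ for $j=1,\ldots,n$ and $k=\sum_{j=1}^n\rho_j-n+1$. Then $R$ is $k$-Buchsbaum, i.e. $\mathfrak m^{k}H^i_{\mathfrak m}(R)=0$ for all $i\neq d$.
   Context: $R$ is generalized Cohen–Macaulay if $H^i_{\mathfrak m}(R)$ has finite length for all $i\ne\dim R$. $G(I)$ is the minimal set of monomial generators of $I$; for a monomial $u=X_1^{c_1}\cdots X_n^{c_n}$, $\nu_j(u)=c_j$. *)

(* Defs.v *)
From HB Require Import structures.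
From mathcomp Require Import all_boot all_order all_algebra.
From mathcomp Require Import mpoly.
Set Implicit Arguments. Unset Strict Implicit. Unset Printing Implicit Defensive.
Import Order.TTheory GRing.Theory Num.Theory.
Local Open Scope ring_scope.

(* A monomial ideal I of S = K[X_1..X_n] is given by a finite list G of
   exponent vectors (monomials X^u, u : 'X_{1..n}); I = (X^u | u in G). *)

Section Defs.
Variables (K : fieldType) (n : nat).
Implicit Types (G : seq 'X_{1..n}).

Definition in_monideal G (p : {mpoly K[n]}) : Prop :=
  exists cs : seq {mpoly K[n]},
    p = \sum_(i < size G) cs`_i * 'X_[nth 0%MM G i].

Definition is_ideal (P : {mpoly K[n]} -> Prop) : Prop :=
  [/\ P 0, (forall x y, P x -> P y -> P (x + y))
    & (forall a x, P x -> P (a * x))].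

Definition is_prime_ideal (P : {mpoly K[n]} -> Prop) : Prop :=
  [/\ is_ideal P, ~ P 1 & (forall x y, P (x * y) -> P x \/ P y)].

(* a chain P_0 < P_1 < ... < P_e of prime ideals of S containing I,
   i.e. a chain of primes of R = S/I of length e *)
Definition prime_chain G (e : nat) (P : nat -> {mpoly K[n]} -> Prop) : Prop :=
  [/\ (forall i, (i <= e)%N -> is_prime_ideal (P i)),
      (forall i, (i <= e)%N -> forall p, in_monideal G p -> P i p)
    & (forall i, (i < e)%N ->
         (forall p, P i p -> P i.+1 p) /\ exists p, P i.+1 p /\ ~ P i p)].

Definition krull_dim_quot G (d : nat) : Prop :=
  (exists P, prime_chain G d P) /\
  (forall e P, prime_chain G e P -> (e <= d)%N).

(* For F a subset of the variables, the component of
   degree a of the localization R_{x_F} = S_{x_F}/I S_{x_F} is K * x^a if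
   a_j >= 0 for all j notin F and x^a notin I S_{x_F}, and is 0 otherwise.
   [cech_cell G F a] tests this. *)
Definition cech_cell G (F : {set 'I_n}) (a : 'I_n -> int) : bool :=
  [forall j, (j \notin F) ==> (0 <= a j)] &&
  ~~ has (fun u : 'X_{1..n} =>
            [forall j, (j \notin F) ==> ((u j)%:Z <= a j)]) G.

(* homogeneous cochains of cohomological degree p and Z^n-degree a:
   elements of C^p_a = (+)_{#|F| = p} (R_{x_F})_a, coordinates on the
   basis x^a of the nonzero summands *)
Definition cech_cochain G (p : nat) (a : 'I_n -> int)
    (c : {ffun {set 'I_n} -> K}) : Prop :=
  forall F, c F != 0 -> (#|F| == p)%N && cech_cell G F a.

Definition cech_sign (E : {set 'I_n}) (j : 'I_n) : K :=
  (-1) ^+ #|[set l in E | (l < j)%N]|.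

(* Cech differential: e_E |-> sum_{j notin E} sign(E,j) e_{E u {j}},
   where each component R_{x_E} -> R_{x_{E u j}} is the localization map *)
Definition cech_d G (a : 'I_n -> int) (c : {ffun {set 'I_n} -> K})
    : {ffun {set 'I_n} -> K} :=
  [ffun F => if cech_cell G F a
             then \sum_(j in F) cech_sign (F :\ j) j * c (F :\ j)
             else 0].

Definition cech_cocycle G p a c : Prop :=
  cech_cochain G p a c /\ cech_d G a c = 0.

Definition cech_coboundary G (p : nat) a c : Prop :=
  if p is q.+1 then exists c', cech_cochain G q a c' /\ cech_d G a c' = c
  else c = 0.

Definition loccoh_nonzero G (i : nat) (a : 'I_n -> int) : Prop :=
  exists c, cech_cocycle G i a c /\ ~ cech_coboundary G i a c.

(* multiplication by the monomial x^b, from degree a to degree a + b *)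
Definition shift (a : 'I_n -> int) (b : 'I_n -> nat) : 'I_n -> int :=
  fun j => a j + (b j)%:Z.

Definition cech_mulmon G (a : 'I_n -> int) (b : 'I_n -> nat)
    (c : {ffun {set 'I_n} -> K}) : {ffun {set 'I_n} -> K} :=
  [ffun F => if cech_cell G F (shift a b) then c F else 0].

(* H^i_m(R) has finite length: only finitely many nonzero graded pieces
   (each piece is finite dimensional over K = R/m) *)
Definition loccoh_finite_length G (i : nat) : Prop :=
  exists N : nat, forall a : 'I_n -> int,
    (exists j, (N < `|a j|)%N) -> ~ loccoh_nonzero G i a.

Definition gen_CM G (d : nat) : Prop :=
  forall i, i != d -> loccoh_finite_length G i.

(* m^k H^i_m(R) = 0 : m^k is generated by the monomials x^b with |b| = k,
   and H^i_m(R) is Z^n-graded, so this says every x^b * [c] vanishes *)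
Definition mpow_annihilates G (k : nat) (i : nat) : Prop :=
  forall (a : 'I_n -> int) (b : 'I_n -> nat), (\sum_j b j)%N = k ->
    forall c, cech_cocycle G i a c ->
      cech_coboundary G i (shift a b) (cech_mulmon G a b c).

End Defs.

(* Main.v *)
Require Import Defs.
From HB Require Import structures.
From mathcomp Require Import all_boot all_order all_algebra.
From mathcomp Require Import mpoly zify ring.
From Stdlib Require Import Classical.
Import Order.TTheory GRing.Theory Num.Theory.
Local Open Scope ring_scope.
Set Implicit Arguments. Unset Strict Implicit.


Lemma sign_sq (K : fieldType) (m : nat) : ((-1) ^+ m : K) * (-1) ^+ m = 1.
Proof. by rewrite -expr2 sqrr_sign. Qed.

Lemma sign_U1 (K : fieldType) n (E : {set 'I_n}) (x y : 'I_n) : x \notin E ->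
  cech_sign K (x |: E) y = (if (x < y)%N then -1 else 1) * cech_sign K E y.
Proof.
move=> xE; rewrite /cech_sign.
have -> : [set z in x |: E | (z < y)%N] =
  (if (x < y)%N then x |: [set z in E | (z < y)%N] else [set z in E | (z < y)%N]).
  apply/setP => z; rewrite !inE; case: ifP => xy; rewrite ?inE;
  case: (eqVneq z x) => [->|] //=; by rewrite ?xy ?(negbTE xE).
case: ifP => _; last by rewrite mul1r.
by rewrite cardsU1 inE (negbTE xE) /= add1n exprS.
Qed.

Lemma cell_drop n (G : seq 'X_{1..n}) a (j : 'I_n) :
  (forall u, u \in G -> (u j)%:Z <= a j) -> 0 <= a j ->
  forall F, cech_cell G F a = cech_cell G (F :\ j) a.
Proof.
move=> Hj H0 F; rewrite /cech_cell; congr andb.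
  apply: eq_forallb => x; rewrite in_setD1.
  by case: (eqVneq x j) => [->|] //=; rewrite H0 !implybT.
congr negb; apply: eq_in_has => u uG /=; apply: eq_forallb => x; rewrite in_setD1.
by case: (eqVneq x j) => [->|] //=; rewrite Hj // !implybT.
Qed.



Definition hmt (K : fieldType) n (j : 'I_n) (c : {ffun {set 'I_n} -> K}) :
  {ffun {set 'I_n} -> K} :=
  [ffun E : {set 'I_n} => if j \in E then 0 else cech_sign K E j * c (j |: E)].

Lemma hmt_id (K : fieldType) n (G : seq 'X_{1..n}) a (j : 'I_n) p (c : {ffun {set 'I_n} -> K}) :
  (forall F, cech_cell G F a = cech_cell G (F :\ j) a) ->
  cech_cocycle G p a c -> forall F, cech_d G a (hmt j c) F = c F.
Proof.
move=> Hc [Hch Hd] F; rewrite /cech_d ffunE.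
case: ifP => cF; last first.
  by case: (eqVneq (c F) 0) => // /Hch /andP[_]; rewrite cF.
case: (boolP (j \in F)) => jF.
  rewrite (bigD1 j) //= big1 ?addr0.
    by rewrite ffunE setD11 mulrA sign_sq mul1r setD1K.
  by move=> l /andP[lF lj]; rewrite ffunE in_setD1 eq_sym lj jF mulr0.
have := congr1 (fun f : {ffun {set 'I_n} -> K} => f (j |: F)) Hd; rewrite /cech_d !ffunE.
rewrite (_ : cech_cell G (j |: F) a = cech_cell G F a); last first.
  by rewrite Hc setU1K.
rewrite cF (bigD1 j) ?setU11 //= setU1K //.
rewrite (eq_bigl (fun l => l \in F)); last first.
  move=> l; rewrite in_setU1; case: (eqVneq l j) => [->|] /=; by rewrite ?andbT ?(negbTE jF).
move=> H.
have HT : \sum_(l in F) cech_sign K ((j |: F) :\ l) l * c ((j |: F) :\ l)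
   = - (cech_sign K F j * c F) by apply/eqP; rewrite -addr_eq0 addrC H.
transitivity (- (cech_sign K F j *
   \sum_(l in F) cech_sign K ((j |: F) :\ l) l * c ((j |: F) :\ l))).
  rewrite mulr_sumr -sumrN; apply: eq_bigr => l lF.
  have lj : l != j by apply: contraNneq jF => <-.
  have E1 : (j |: F) :\ l = j |: (F :\ l).
    apply/setP => x; rewrite !inE; case: (eqVneq x j) => [->|] //=.
    by rewrite eq_sym lj.
  have jE : j \notin F :\ l by rewrite in_setD1 (negbTE jF) andbF.
  have lE : l \notin F :\ l by rewrite setD11.
  rewrite ffunE (negbTE jE) E1.
  have sF : cech_sign K F j = (if (l < j)%N then -1 else 1) * cech_sign K (F :\ l) j.
    by rewrite -{1}(setD1K lF) sign_U1.
  rewrite sF sign_U1 //.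
  case: (ltngtP l j) => [lt|gt|eq]; last by move: lj; rewrite (val_inj eq) eqxx.
    rewrite ?mulN1r ?mul1r ?mulrN ?mulNr ?opprK.
    ring.
  rewrite ?mulN1r ?mul1r ?mulrN ?mulNr ?opprK.
  ring.
by rewrite HT mulrN opprK mulrA sign_sq mul1r.
Qed.



Lemma acyclic (K : fieldType) n (G : seq 'X_{1..n}) a (j : 'I_n) p
  (c : {ffun {set 'I_n} -> K}) :
  (forall F, cech_cell G F a = cech_cell G (F :\ j) a) ->
  cech_cocycle G p a c -> cech_coboundary G p a c.
Proof.
move=> Hc Hcc; have Hid := hmt_id Hc Hcc; case: Hcc => Hch Hd.
case: p Hch Hd Hid => [|q] Hch Hd Hid /=.
  apply/ffunP => F; rewrite -Hid ffunE; case: ifP => _; last first.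
  by rewrite ffunE.
  rewrite ffunE big1 // => l _; rewrite ffunE; case: ifP => _; first by rewrite mulr0.
  case: (eqVneq (c (j |: (F :\ l))) 0) => [->|/Hch /andP[/eqP/cards0_eq E0 _]]; first by rewrite !mulr0.
  have : j \in j |: (F :\ l) by rewrite !inE eqxx.
  by rewrite E0 inE.
rewrite /cech_coboundary; exists (hmt j c); split; last by apply/ffunP => F; rewrite Hid.
move=> E; rewrite ffunE; case: ifP => jE; first by rewrite eqxx.
rewrite mulf_eq0 negb_or => /andP[_ /Hch /andP[]].
rewrite cardsU1 jE /= add1n eqSS => -> /=.
by rewrite Hc setU1K ?jE.
Qed.



Lemma transfer (K : fieldType) n (G : seq 'X_{1..n}) a a' i :
  (forall F, cech_cell G F a = cech_cell G F a') ->
  loccoh_nonzero K G i a -> loccoh_nonzero K G i a'.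
Proof.
move=> Hc.
have Hd (c : {ffun {set 'I_n} -> K}) : cech_d G a c = cech_d G a' c.
  by apply/ffunP => F; rewrite !ffunE Hc.
have Hch p (c : {ffun {set 'I_n} -> K}) :
  cech_cochain G p a c <-> cech_cochain G p a' c.
  by split=> H F /H; rewrite Hc.
case=> c [[ch d] nb]; exists c; split; first split.
- by apply/Hch.
- by rewrite -Hd.
move=> cb; apply: nb; move: cb; rewrite /cech_coboundary; case: i ch d => // q ch d.
by case=> c' [/Hch h1 h2]; exists c'; rewrite Hd.
Qed.

Lemma cell_neg n (G : seq 'X_{1..n}) (a : 'I_n -> int) j (m : int) :
  a j < 0 -> m < 0 ->
  forall F, cech_cell G F a = cech_cell G F (fun x => if x == j then m else a x).
Proof.
move=> aj mj F; rewrite /cech_cell.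
case: (boolP (j \in F)) => jF.
  congr andb; first by apply: eq_forallb => x; case: (eqVneq x j) => [->|]; rewrite ?jF.
  congr negb; apply: eq_has => u /=; apply: eq_forallb => x.
  by case: (eqVneq x j) => [->|]; rewrite ?jF.
have H (b : 'I_n -> int) : b j < 0 -> [forall x, (x \notin F) ==> (0 <= b x)] = false.
  by move=> bj; apply/negbTE/forallP => /(_ j); rewrite jF /= leNgt bj.
by rewrite !H //= eqxx.
Qed.

Lemma cell_sub1 n (G : seq 'X_{1..n}) a b (E F : {set 'I_n}) :
  E \subset F -> cech_cell G E a -> cech_cell G F (shift a b) -> cech_cell G F a.
Proof.
rewrite /cech_cell => sEF /andP[/forallP Ea _] /andP[_ Fab]; apply/andP; split.
  apply/forallP => x; apply/implyP => xF; apply: (implyP (Ea x)).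
  by apply: contra xF => xE; exact: (subsetP sEF).
apply: contra Fab => /hasP[u uG /forallP Hu]; apply/hasP; exists u => //.
apply/forallP => x; apply/implyP => xF; have := implyP (Hu x) xF; rewrite /shift => h.
lia.
Qed.

Lemma cell_sub2 n (G : seq 'X_{1..n}) a b (E F : {set 'I_n}) :
  E \subset F -> cech_cell G E a -> cech_cell G F (shift a b) -> cech_cell G E (shift a b).
Proof.
rewrite /cech_cell => sEF /andP[/forallP Ea _] /andP[_ Fab]; apply/andP; split.
  apply/forallP => x; apply/implyP => xE; have := implyP (Ea x) xE; rewrite /shift => h.
  lia.
apply: contra Fab => /hasP[u uG /forallP Hu]; apply/hasP; exists u => //.
apply/forallP => x; apply/implyP => xF; apply: (implyP (Hu x)).
by apply: contra xF => xE; exact: (subsetP sEF).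
Qed.

Lemma mulmon_d (K : fieldType) n (G : seq 'X_{1..n}) a b (c : {ffun {set 'I_n} -> K}) :
  (forall F, c F != 0 -> cech_cell G F a) ->
  cech_mulmon G a b (cech_d G a c) = cech_d G (shift a b) (cech_mulmon G a b c).
Proof.
move=> H; apply/ffunP => F; rewrite /cech_mulmon /cech_d !ffunE.
case: (boolP (cech_cell G F (shift a b))) => cFab //=.
case: (boolP (cech_cell G F a)) => cFa.
  apply: eq_bigr => l lF; rewrite ffunE.
  case: (eqVneq (c (F :\ l)) 0) => [->|nz]; first by rewrite if_same.
  by rewrite (cell_sub2 (subD1set F l) (H _ nz) cFab).
symmetry; apply: big1 => l lF; rewrite ffunE.
case: (eqVneq (c (F :\ l)) 0) => [->|nz]; first by rewrite if_same mulr0.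
by rewrite (cell_sub1 (subD1set F l) (H _ nz) cFab) in cFa.
Qed.

Lemma mulmon_cochain (K : fieldType) n (G : seq 'X_{1..n}) a b p (c : {ffun {set 'I_n} -> K}) :
  cech_cochain G p a c -> cech_cochain G p (shift a b) (cech_mulmon G a b c).
Proof.
move=> H F; rewrite ffunE; case: ifP => cF; last by rewrite eqxx.
by move=> /H /andP[-> _].
Qed.

Lemma mulmon0 (K : fieldType) n (G : seq 'X_{1..n}) a b :
  cech_mulmon G a b (0 : {ffun {set 'I_n} -> K}) = 0.
Proof. by apply/ffunP => F; rewrite !ffunE; case: ifP. Qed.


Unset Implicit Arguments.
Theorem theorem2p5 (K : fieldType) (n : nat) (G : seq 'X_{1..n}) (d : nat) :
  (* G is the minimal monomial generating set G(I) of I = (X^u | u in G) *)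
  (forall u v, u \in G -> v \in G -> (forall j, (u j <= v j)%N) -> u = v) ->
  krull_dim_quot K G d ->
  gen_CM K G d ->
  let rho := fun j : 'I_n => (\max_(u <- G) u j)%N in
  let k := ((\sum_(j < n) rho j) + 1 - n)%N in
  forall i : nat, i != d -> mpow_annihilates K G k i.
Proof.
move=> _ _ HCM rho k i hi; rewrite /mpow_annihilates => a b hb c hc.
have supp : forall F, c F != 0 -> cech_cell G F a.
  by move=> F /(proj1 hc) /andP[_ ->].
have Hcc : cech_cocycle G i (shift a b) (cech_mulmon G a b c).
  split; first exact: mulmon_cochain (proj1 hc).
  by rewrite -mulmon_d // (proj2 hc) mulmon0.
case: (boolP [exists j, a j < 0]).
  case/existsP => j aj.
  have cob : cech_coboundary G i a c.
    apply: NNPP => nb; have [N HN] := HCM i hi.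
    apply: (HN (fun x => if x == j then - (N.+1)%:Z else a x)).
      by exists j; rewrite eqxx abszN absz_nat.
    have mneg : - (N.+1)%:Z < 0 by [].
    apply: (transfer (a := a)) => [F|]; first exact: cell_neg.
    by exists c.
  move: cob; rewrite /cech_coboundary; case: (i) => [->|q]; first exact: mulmon0.
  case=> c' [ch' dc']; exists (cech_mulmon G a b c'); split.
    exact: mulmon_cochain.
  rewrite -dc' mulmon_d // => F /ch' /andP[_ ->] //.
move/existsPn => Hpos.
have Hpos' : forall j, 0 <= a j by move=> j; have := Hpos j; rewrite -leNgt.
have [j Hj] : exists j, (rho j)%:Z <= a j + (b j)%:Z.
  apply: NNPP => Hno.
  have Hlt : forall j, (absz (a j) + b j < rho j)%N.
    move=> j; case: (leqP (rho j) (absz (a j) + b j)) => // le; exfalso; apply: Hno.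
    exists j; have := Hpos' j; lia.
  have : (\sum_(j < n) (b j + 1) <= \sum_(j < n) rho j)%N.
    by apply: leq_sum => j _; have := Hlt j; lia.
  rewrite big_split /= sum1_card card_ord hb /k; move: (\sum_(j < n) rho j) => s; lia.
apply: (acyclic (j := j)) Hcc.
apply: cell_drop; last by rewrite /shift; have := Hpos' j; lia.
move=> u uG; rewrite /shift.
have : (u j <= rho j)%N by rewrite /rho; apply: leq_bigmax_seq.
lia.
Qed.
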